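(* Let $K\ge1$, $T\ge1$, $\ell_1,\dots,\ell_T\in[0,1]^K$, $\phi>1$, $\alpha>0$. For FlipFlop with parameters $\phi,\alpha$, the cumulative mixability gap of the flop regime satisfies \[ \big(\underline{\Delta}_T\big)^2\le\underline{V}_T\ln K+\big(1+\tfrac23\ln K\big)\underline{\Delta}_T. \]
   Context: Hedge setting: $K$ experts; in round $t$ the learner chooses a probability vector $w_t$, then $\ell_t$ is revealed and the learner suffers $h_t=\sum_kw_{t,k}\ell_{t,k}$. Write $L_{t,k}=\sum_{s=1}^t\ell_{s,k}$ ($L_{0,k}=0$), $L^*_t=\min_kL_{t,k}$. Exponential weights with learning rate $\eta\in(0,\infty]$ at time $t$: $w_{t,k}=e^{-\eta L_{t-1,k}}/\sum_je^{-\eta L_{t-1,j}}$ if $\eta<\infty$; for $\eta=\infty$, $w_t$ uniform on $\{k:L_{t-1,k}=L^*_{t-1}\}$. With learning rate $\eta_t$ in round $t$: mix loss $m_t=-\frac1{\eta_t}\ln\sum_kw_{t,k}e^{-\eta_t\ell_{t,k}}$ if $\eta_t<\infty$, $m_t=L^*_t-L^*_{t-1}$ if $\eta_t=\infty$; mixability gap $\delta_t=h_t-m_t$; loss variance $v_t=\sum_kw_{t,k}(\ell_{t,k}-h_t)^2$. FlipFlop with parameters $\phi>1,\alpha>0$: keeps accumulators $\overline{\Delta}$ (flip) and $\underline{\Delta}$ (flop), both initially $0$, starting in the flip regime. In round $t$: flip regime uses $\eta_t=\infty$; flop regime uses $\eta_t=\ln K/\underline{\Delta}_{t-1}$ ($=\infty$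 if $\underline{\Delta}_{t-1}=0$); weights are exponential weights with learning rate $\eta_t$ from $L_{t-1}$. After round $t$, $\delta_t$ is added to the current regime's accumulator. If in flip and $\overline{\Delta}_t>(\phi/\alpha)\underline{\Delta}_t$, switch to flop for round $t+1$; if in flop and $\underline{\Delta}_t>\alpha\overline{\Delta}_t$, switch to flip for round $t+1$. $\underline{\Delta}_T$ is the sum of $\delta_t$ over flop rounds $t\le T$, and $\underline{V}_T$ is the sum of $v_t$ over flop rounds $t\le T$. *)

(* Defs.v *)
From HB Require Import structures.
From mathcomp Require Import all_boot all_order all_algebra.
From mathcomp Require Import boolp reals.
From mathcomp Require Import sequences exp.
Set Implicit Arguments. Unset Strict Implicit. Unset Printing Implicit Defensive.
Import Order.TTheory GRing.Theory Num.Theory.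
Local Open Scope ring_scope.

Section Hedge.
Variables (R : realType) (K : nat) (l : nat -> 'I_K -> R).
(* l t k = loss of expert k in round t (rounds are numbered 1, 2, ...) *)

Definition cumloss (t : nat) (k : 'I_K) : R := \sum_(1 <= s < t.+1) l s k.

(* L*_t = min_k L_{t,k}  (the default of the big min is an actual element, so
   it does not affect the value when K >= 1) *)
Definition Lmin (t : nat) : R :=
  \big[Num.min/(if [pick k : 'I_K] is Some k0 then cumloss t k0 else 0)]_(k : 'I_K)
     cumloss t k.

(* learning rates: [Some e] = finite eta = e, [None] = eta = +infinity *)
(* exponential weights used in round t (computed from L_{t-1}) *)
Definition ew_weight (eta : option R) (t : nat) (k : 'I_K) : R :=
  match eta with
  | Some e => expR (- e * cumloss t.-1 k) / \sum_(j : 'I_K) expR (- e * cumloss t.-1 j)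
  | None => (if cumloss t.-1 k == Lmin t.-1 then 1 else 0)
            / #|[set j : 'I_K | cumloss t.-1 j == Lmin t.-1]|%:R
  end.

Definition hedge_loss (eta : option R) (t : nat) : R :=
  \sum_(k : 'I_K) ew_weight eta t k * l t k.

Definition mix_loss (eta : option R) (t : nat) : R :=
  match eta with
  | Some e => - e^-1 * ln (\sum_(k : 'I_K) ew_weight eta t k * expR (- e * l t k))
  | None => Lmin t - Lmin t.-1
  end.

Definition mix_gap (eta : option R) (t : nat) : R := hedge_loss eta t - mix_loss eta t.

Definition loss_var (eta : option R) (t : nat) : R :=
  \sum_(k : 'I_K) ew_weight eta t k * (l t k - hedge_loss eta t) ^+ 2.

(* FlipFlop state after a round: current regime for the next round,
   flip accumulator, flop accumulator, and sum of v_t over flop rounds *)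
Record ff_state := FFState {
  ff_in_flip : bool;
  ff_dflip : R;
  ff_dflop : R;
  ff_vflop : R }.

Definition ff_init : ff_state := FFState true 0 0 0.

Variables (phi alpha : R).

Definition ff_eta (s : ff_state) : option R :=
  if ff_in_flip s then None
  else if ff_dflop s == 0 then None else Some (ln K%:R / ff_dflop s).

Definition ff_step (t : nat) (s : ff_state) : ff_state :=
  let eta := ff_eta s in
  let d := mix_gap eta t in
  if ff_in_flip s then
    let df := ff_dflip s + d in
    FFState (~~ (df > (phi / alpha) * ff_dflop s)) df (ff_dflop s) (ff_vflop s)
  else
    let dl := ff_dflop s + d in
    FFState (dl > alpha * ff_dflip s) (ff_dflip s) dl (ff_vflop s + loss_var eta t).

Fixpoint ff_run (t : nat) : ff_state :=
  match t with
  | 0 => ff_init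
  | t'.+1 => ff_step t'.+1 (ff_run t')
  end.

Definition flop_gap (T : nat) : R := ff_dflop (ff_run T).
Definition flop_var (T : nat) : R := ff_vflop (ff_run T).

End Hedge.

(* Main.v *)
Require Import Defs.
From HB Require Import structures.
From mathcomp Require Import all_boot all_order all_algebra.
From mathcomp Require Import boolp reals.
From mathcomp Require Import sequences exp.
From mathcomp Require Import topology normedtype derive.
From mathcomp Require Import ring lra zify.
From Stdlib Require Import Lia.
Import Order.TTheory GRing.Theory Num.Theory numFieldNormedType.Exports.
Local Open Scope ring_scope.
Section Scalar.
Variable R : realType.

Lemma H2_ge0 (x : R) : 0 <= 2 - (2 - 2 * x) * expR x.
Proof.
have h := expR_ge1Dx (- x).
have : (1 - x) * expR x <= 1.
  have e := expR_gt0 x.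
  have : (1 - x) * expR x <= expR (- x) * expR x.
    by rewrite ler_pM2r // addrC.
  by rewrite -expRD addNr expR0.
nra.
Qed.

Definition H1 (x : R) := 4 + 2 * x - (4 - 2 * x) * expR x.
Definition H0 (x : R) := (6 + 4 * x + x ^+ 2) - (6 - 2 * x) * expR x.

Lemma dH1 (x : R) : is_derive x (1:R) H1 (2 - (2 - 2 * x) * expR x).
Proof.
rewrite /H1.
apply: is_derive_eq.
rewrite /GRing.scale /=. ring.
Qed.

Lemma dH0 (x : R) : is_derive x (1:R) H0 (H1 x).
Proof.
rewrite /H0 /H1; apply: is_derive_eq.
rewrite /GRing.scale /=. ring.
Qed.

Lemma mvt_mono (f df : R -> R) (a b : R) :
  (forall x, is_derive x (1:R) f (df x)) -> a <= b ->
  (forall c, a <= c <= b -> 0 <= df c) -> f a <= f b.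
Proof.
move=> D ab P.
have [c cab E] := @MVT_segment R f df a b ab (fun x _ => D x)
  (derivable_within_continuous (fun x _ => @ex_derive _ _ _ _ _ _ _ (D x))).
rewrite -subr_ge0 E mulr_ge0 // ?subr_ge0 //.
apply: P; by move: cab; rewrite in_itv.
Qed.

Lemma mvt_anti (f df : R -> R) (a b : R) :
  (forall x, is_derive x (1:R) f (df x)) -> a <= b ->
  (forall c, a <= c <= b -> df c <= 0) -> f b <= f a.
Proof.
move=> D ab P.
have [c cab E] := @MVT_segment R f df a b ab (fun x _ => D x)
  (derivable_within_continuous (fun x _ => @ex_derive _ _ _ _ _ _ _ (D x))).
rewrite -subr_le0 E mulr_le0_ge0 // ?subr_ge0 //.
apply: P; by move: cab; rewrite in_itv.
Qed.

Lemma H1_pos x : 0 <= x -> 0 <= H1 x.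
Proof.
move=> x0.
have -> : 0 = H1 0 by rewrite /H1 expR0; ring.
apply: (@mvt_mono H1 (fun x => 2 - (2 - 2 * x) * expR x) _ _ dH1) => // c _; exact: H2_ge0.
Qed.

Lemma H1_neg x : x <= 0 -> H1 x <= 0.
Proof.
move=> x0.
have -> : 0 = H1 0 by rewrite /H1 expR0; ring.
apply: (@mvt_mono H1 (fun x => 2 - (2 - 2 * x) * expR x) _ _ dH1) => // c _; exact: H2_ge0.
Qed.

Lemma H0_ge0 x : 0 <= H0 x.
Proof.
have -> : 0 = H0 0 by rewrite /H0 expR0; ring.
have [x0|x0] := leP 0 x.
  apply: (@mvt_mono H0 H1 _ _ dH0) => // c /andP[c0 _]; exact: H1_pos.
apply: (@mvt_anti H0 H1 _ _ dH0); first exact: ltW.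
move=> c /andP[_ c0]; exact: H1_neg.
Qed.

Lemma exp_pade (x e : R) : x <= e -> e < 3 ->
  expR x <= 1 + x + 3 * x ^+ 2 / (6 - 2 * e).
Proof.
move=> xe e3.
have h := H0_ge0 x; rewrite /H0 in h.
have p1 : 0 < 6 - 2 * e by lra.
have p2 : 0 < 6 - 2 * x by lra.
have ex := expR_gt0 x.
have q : 3 * x ^+ 2 / (6 - 2 * x) <= 3 * x ^+ 2 / (6 - 2 * e).
  rewrite ler_pdivlMr // mulrAC ler_pdivrMr //.
  have : 0 <= 3 * x ^+ 2 by rewrite mulr_ge0 // sqr_ge0.
  nra.
suff : expR x <= 1 + x + 3 * x ^+ 2 / (6 - 2 * x) by lra.
have hy : 3 * x ^+ 2 / (6 - 2 * x) * (6 - 2 * x) = 3 * x ^+ 2.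
  by rewrite divfK // gt_eqF.
rewrite -(ler_pM2r p2).
set y := 3 * x ^+ 2 / (6 - 2 * x) in hy *.
nra.
Qed.

Section Weights.
Variable K : nat.
Variables (w x : 'I_K -> R).
Hypothesis w0 : forall k, 0 <= w k.
Hypothesis w1 : \sum_k w k = 1.
Hypothesis x01 : forall k, 0 <= x k <= 1.

Lemma sumlin (h a b c : R) :
  \sum_k w k * (a + b * (h - x k) + c * (x k - h) ^+ 2) =
  a + b * (h - \sum_k w k * x k) + c * \sum_k w k * (x k - h) ^+ 2.
Proof.
rewrite (eq_bigr (fun k => a * w k + b * (h * w k - w k * x k) + c * (w k * (x k - h) ^+ 2))); last by move=> k _; ring.
rewrite !big_split /= -!mulr_sumr sumrB -mulr_sumr w1; ring.
Qed.

Lemma hedge01 : 0 <= \sum_k w k * x k <= 1.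
Proof.
apply/andP; split; first by apply: sumr_ge0 => k _; rewrite mulr_ge0 // (andP (x01 k)).1.
rewrite -w1; apply: ler_sum => k _; apply: ler_piMr => //; exact: (andP (x01 k)).2.
Qed.

Lemma var_ge0 h : 0 <= \sum_k w k * (x k - h) ^+ 2.
Proof. by apply: sumr_ge0 => k _; rewrite mulr_ge0 // sqr_ge0. Qed.

Lemma bern (e : R) : 0 < e ->
  let h := \sum_k w k * x k in
  let d := h - (- e^-1 * ln (\sum_k w k * expR (- e * x k))) in
  let v := \sum_k w k * (x k - h) ^+ 2 in
  [/\ 0 <= d, d <= 1 & 2 * d <= e * v + 2 / 3 * e * d].
Proof.
move=> e0 h d v.
have /andP[h0 h1] := hedge01.
set T := \sum_k w k * expR (e * (h - x k)).
have ST : \sum_k w k * expR (- e * x k) = expR (- e * h) * T.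
  rewrite /T mulr_sumr; apply: eq_bigr => k _; rewrite mulrCA -expRD.
  congr (_ * expR _); ring.
have T1 : 1 <= T.
  have : \sum_k w k * (1 + e * (h - x k) + 0 * (x k - h) ^+ 2) <= T.
    apply: ler_sum => k _; apply: ler_wpM2l => //; rewrite mul0r addr0.
    exact: expR_ge1Dx.
  by rewrite sumlin -/h subrr mulr0 mul0r !addr0.
have T0 : 0 < T by apply: lt_le_trans T1.
have dE : d = e^-1 * ln T.
  rewrite /d ST lnM ?posrE ?expR_gt0 // expRK. field; exact: lt0r_neq0.
have lT0 : 0 <= ln T by exact: ln_ge0.
have d0 : 0 <= d by rewrite dE mulr_ge0 // invr_ge0 ltW.
have v0 : 0 <= v by exact: var_ge0.
have de : d * e = ln T by rewrite dE mulrC mulrA divff ?mul1r // gt_eqF.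
split => //.
  have S1 : \sum_k w k * expR (- e * x k) <= 1.
    rewrite -w1; apply: ler_sum => k _; apply: ler_piMr => //.
    rewrite expR_le1 mulNr oppr_le0; apply: mulr_ge0; [exact: ltW | by case/andP: (x01 k)].
  have hl : e^-1 * ln (\sum_k w k * expR (- e * x k)) <= 0.
    by apply: mulr_ge0_le0; [rewrite invr_ge0 ltW | exact: ln_le0].
  rewrite /d /h mulNr opprK; lra.
have [e3|e3] := leP 3 e.
  have : 0 <= e * v by rewrite mulr_ge0 // ltW.
  nra.
set u := 3 * e ^+ 2 / (6 - 2 * e) * v.
have p6 : 0 < 6 - 2 * e by lra.
have u0 : 0 <= u by rewrite /u mulr_ge0 // mulr_ge0 // ?mulr_ge0 ?sqr_ge0 ?invr_ge0 ?ltW //.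
have Tu : T <= 1 + u.
  have : T <= \sum_k w k * (1 + e * (h - x k) + 3 * e ^+ 2 / (6 - 2 * e) * (x k - h) ^+ 2).
    apply: ler_sum => k _; apply: ler_wpM2l => //.
    have -> : 3 * e ^+ 2 / (6 - 2 * e) * (x k - h) ^+ 2 = 3 * (e * (h - x k)) ^+ 2 / (6 - 2 * e).
      by field; exact: lt0r_neq0.
    apply: exp_pade => //.
    have := x01 k; move=> /andP[xk0 xk1].
    have : h - x k <= 1 by rewrite /h; lra.
    nra.
  by rewrite sumlin -/h subrr mulr0 addr0.
have lu : ln T <= u.
  apply: le_trans (le_ln1Dx _); last by lra.
  by rewrite ler_ln // posrE; lra.
have uE : u * (6 - 2 * e) = 3 * e ^+ 2 * v.
  rewrite /u; field; exact: lt0r_neq0.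
nra.
Qed.
End Weights.
End Scalar.
Section Round.
Variables (R : realType) (K : nat) (l : nat -> 'I_K -> R).
Hypothesis K1 : (1 <= K)%N.

Lemma cumlossS t k : cumloss l t.+1 k = cumloss l t k + l t.+1 k.
Proof. by rewrite /cumloss big_nat_recr. Qed.

Lemma Lmin_le t k : Lmin l t <= cumloss l t k.
Proof.
rewrite /Lmin.
have : k \in index_enum 'I_K by rewrite mem_index_enum.
elim: (index_enum _) => [//|i r IH]; rewrite inE big_cons => /orP[/eqP<-|kr].
  by rewrite ge_min lexx.
by rewrite ge_min IH // orbT.
Qed.

Lemma Lmin_ex t : exists k, Lmin l t = cumloss l t k.
Proof.
have k0 : 'I_K := Ordinal K1.
rewrite /Lmin; apply: (big_ind (fun x => exists k, x = cumloss l t k)).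
- case: pickP => [k _|]; first by exists k.
  by move=> /(_ k0).
- move=> x y [i ->] [j ->]; rewrite minEle; case: ifP => _; [by exists i|by exists j].
- by move=> i _; exists i.
Qed.

Lemma sum_pos (a : 'I_K -> R) : (forall k, 0 < a k) -> 0 < \sum_k a k.
Proof.
move=> ap; have k0 : 'I_K := Ordinal K1.
rewrite (bigD1 k0) //=.
have : 0 <= \sum_(i | i != k0) a i by apply: sumr_ge0 => i _; exact: ltW.
have := ap k0; lra.
Qed.

Lemma ew_ge0 eta t k : 0 <= ew_weight l eta t k.
Proof.
case: eta => [e|] /=.
  by rewrite divr_ge0 ?expR_ge0 // sumr_ge0 // => i _; rewrite expR_ge0.
by rewrite divr_ge0 //; case: ifP.
Qed.

Lemma ew_sum eta t : \sum_k ew_weight l eta t k = 1.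
Proof.
case: eta => [e|] /=.
  rewrite -mulr_suml divff // gt_eqF //; apply: sum_pos => k; exact: expR_gt0.
rewrite -mulr_suml.
set S := [set j | cumloss l t.-1 j == Lmin l t.-1].
have -> : \sum_(i < K) (if cumloss l t.-1 i == Lmin l t.-1 then 1 else 0) = \sum_(i in S) (1 : R).
  by rewrite [RHS]big_mkcond; apply: eq_bigr => i _; rewrite inE.
rewrite sumr_const divff //.
have [k kE] := Lmin_ex t.-1.
rewrite pnatr_eq0 -lt0n; apply/card_gt0P; exists k; by rewrite inE kE.
Qed.

Lemma var_ge0' eta t : 0 <= loss_var l eta t.
Proof. by apply: sumr_ge0 => k _; rewrite mulr_ge0 ?ew_ge0 // sqr_ge0. Qed.

Lemma some_gap t e : 0 < e -> (forall k, 0 <= l t k <= 1) ->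
  [/\ 0 <= mix_gap l (Some e) t, mix_gap l (Some e) t <= 1 &
   2 * mix_gap l (Some e) t <= e * loss_var l (Some e) t + 2 / 3 * e * mix_gap l (Some e) t].
Proof.
move=> e0 l01.
have H := @bern R K _ _ (ew_ge0 (Some e) t) (ew_sum (Some e) t) l01 e e0.
exact: H.
Qed.

Lemma none_gap_eq t : mix_gap l None t.+1 =
  \sum_k ew_weight l None t.+1 k * (l t.+1 k - (Lmin l t.+1 - Lmin l t)).
Proof.
rewrite /mix_gap /hedge_loss.
have -> : mix_loss l None t.+1 = Lmin l t.+1 - Lmin l t by [].
set m := Lmin l t.+1 - Lmin l t.
rewrite [RHS](eq_bigr (fun k => ew_weight l None t.+1 k * l t.+1 k - m * ew_weight l None t.+1 k)); last first.
  by move=> k _; ring.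
by rewrite sumrB -mulr_sumr ew_sum mulr1.
Qed.

Lemma none_gap t : (forall k, 0 <= l t.+1 k <= 1) -> 0 <= mix_gap l None t.+1 <= 1.
Proof.
move=> l01; apply/andP; split.
  rewrite none_gap_eq; apply: sumr_ge0 => k _.
  case: (boolP (cumloss l t k == Lmin l t)) => [/eqP kE|kn].
    rewrite mulr_ge0 ?ew_ge0 // subr_ge0.
    have := Lmin_le t.+1 k; rewrite cumlossS kE; lra.
  by rewrite /ew_weight /= (negbTE kn) mul0r mul0r.
have /andP[_ h1] := @hedge01 R K _ _ (ew_ge0 None t.+1) (ew_sum None t.+1) l01.
have [k kE] := Lmin_ex t.+1.
have := Lmin_le t k.
have := l01 k; move=> /andP[lk0 _].
rewrite /mix_gap /hedge_loss.
have -> : mix_loss l None t.+1 = Lmin l t.+1 - Lmin l t by [].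
rewrite kE cumlossS.
move: h1; rewrite /hedge_loss; lra.
Qed.
End Round.

Section Main.
Variables (R : realType) (K : nat) (l : nat -> 'I_K -> R) (phi alpha : R).
Hypothesis K1 : (1 <= K)%N.

Lemma gap0_K1 t : (K <= 1)%N -> mix_gap l None t.+1 = 0.
Proof.
move=> Kle; rewrite none_gap_eq //; apply: big1 => k _.
have [k1 k1E] := @Lmin_ex R K l K1 t.+1.
have [k2 k2E] := @Lmin_ex R K l K1 t.
have ord1 : forall i j : 'I_K, i = j.
  move=> i j; apply: val_inj => /=; have := ltn_ord i; have := ltn_ord j; lia.
rewrite k1E k2E (ord1 k1 k) (ord1 k2 k) cumlossS.
have -> : cumloss l t k + l t.+1 k - cumloss l t k = l t.+1 k by ring.
by rewrite subrr mulr0.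
Qed.


Lemma run_K1 t : (K <= 1)%N -> ff_run l phi alpha t = FFState true 0 0 0.
Proof.
move=> Kle; elim: t => [//|t IH] /=.
rewrite IH /ff_step /ff_eta /=.
rewrite gap0_K1 // addr0 mulr0 ltxx //.
Qed.

Lemma inv (T : nat) : (2 <= K)%N ->
  (forall (t : nat) (k : 'I_K), (1 <= t <= T)%N -> 0 <= l t k <= 1) ->
  forall t, (t <= T)%N ->
  0 <= ff_dflop (ff_run l phi alpha t) /\
  ff_dflop (ff_run l phi alpha t) ^+ 2 <=
    ff_vflop (ff_run l phi alpha t) * ln (K%:R : R)
    + (1 + 2 / 3 * ln (K%:R : R)) * ff_dflop (ff_run l phi alpha t).
Proof.
move=> K2 l01; elim => [_|t IH tT] /=.
  by rewrite expr0n /= mul0r mulr0 addr0 lexx.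
have [D0 H] := IH (ltnW tT).
have l01' : forall k, 0 <= l t.+1 k <= 1.
  by move=> k; apply: l01; rewrite tT.
have L0 : 0 < ln (K%:R : R) by apply: ln_gt0; rewrite ltr1n.
move: D0 H; rewrite /ff_step /ff_eta.
case: (ff_run l phi alpha t) => fl df dl vl /= D0 H.
case: fl => //=.
case: eqP => [dl0|dn0] /=.
  have /andP[g0 g1] := @none_gap R K l K1 t l01'.
  have v0 := @var_ge0' R K l None t.+1.
  move: H; rewrite dl0 => H.
  split; first by rewrite add0r.
  set g := mix_gap l None t.+1 in g0 g1 *.
  set v := loss_var l None t.+1 in v0 *.
  have : 0 <= v * ln (K%:R : R) by rewrite mulr_ge0 // ltW.
  nra.
have dlp : 0 < dl by rewrite lt_def; apply/andP; split => //; apply/eqP.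
set e := ln (K%:R : R) / dl.
have e0 : 0 < e by rewrite divr_gt0.
have [g0 g1 gb] := @some_gap R K l K1 t.+1 e e0 l01'.
have v0 := @var_ge0' R K l (Some e) t.+1.
set g := mix_gap l (Some e) t.+1 in g0 g1 gb *.
set v := loss_var l (Some e) t.+1 in v0 gb *.
split; first by rewrite addr_ge0.
have P : dl * (2 * g) <= dl * (e * v + 2 / 3 * e * g) by rewrite ler_wpM2l // ltW.
have Q : dl * (e * v + 2 / 3 * e * g) = ln (K%:R : R) * v + 2 / 3 * ln (K%:R : R) * g.
  rewrite /e; field; exact: lt0r_neq0.
rewrite Q in P.
nra.
Qed.
End Main.

Theorem lemma12 (R : realType) (K T : nat) (l : nat -> 'I_K -> R) (phi alpha : R) :
  (1 <= K)%N -> (1 <= T)%N ->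
  (forall (t : nat) (k : 'I_K), (1 <= t <= T)%N -> 0 <= l t k <= 1) ->
  1 < phi -> 0 < alpha ->
  flop_gap l phi alpha T ^+ 2 <=
    flop_var l phi alpha T * ln (K%:R : R)
    + (1 + 2 / 3 * ln (K%:R : R)) * flop_gap l phi alpha T.
Proof.
move=> K1 T1 l01 _ _; rewrite /flop_gap /flop_var.
have [K2|Kle] := ltnP 1 K.
  by have [] := @inv R K l phi alpha K1 T K2 l01 T (leqnn T).
rewrite (@run_K1 R K l phi alpha K1 T Kle) /=.
by rewrite expr0n /= mul0r mulr0 addr0 lexx.
Qed.
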